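(* Let $T$ be a tree of order $n\geq 3$ and let $\mathcal{G}$ be an arbitrary Abelian group of order at least $4$. Then there exists a labeling $f\colon E(T)\to\mathcal{G}\setminus\{0\}$ such that $w_f(u)\neq w_f(v)$ for every edge $uv$ of $T$.
   Context: $w_f(v)=\sum_{u\in N(v)}f(uv)$, the sum taken in $\mathcal{G}$; $0$ is the identity of $\mathcal{G}$. *)

(* Defs.v *)
From HB Require Import structures.
From mathcomp Require Import all_boot all_order all_algebra.
Set Implicit Arguments. Unset Strict Implicit. Unset Printing Implicit Defensive.
Import GRing.Theory.
Local Open Scope ring_scope.

Definition simple_graph (V : finType) (e : rel V) : Prop :=
  symmetric e /\ irreflexive e.

(* A tree: a connected simple graph with no cycle (a cycle being a
   closed walk through at least 3 pairwise distinct vertices). *)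
Definition is_tree (V : finType) (e : rel V) : Prop :=
  [/\ simple_graph e,
      (forall x y : V, connect e x y)
    & (forall p : seq V, ucycle e p -> (size p <= 2)%N)].

(* An edge labeling f : E(T) -> G \ {0}, represented as a symmetric function
   on pairs of vertices whose values on edges are nonzero (values on
   non-edges are irrelevant). *)
Definition nonzero_edge_labeling (V : finType) (e : rel V) (G : zmodType)
  (f : V -> V -> G) : Prop :=
  (forall u v, f u v = f v u) /\ (forall u v, e u v -> f u v != 0).

Definition weight (V : finType) (e : rel V) (G : zmodType)
  (f : V -> V -> G) (v : V) : G :=
  \sum_(u | e v u) f v u.

(* Main.v *)
From HB Require Import structures.
From mathcomp Require Import all_boot all_order all_algebra.
From mathcomp Require Import zify.
Require Import Defs.
Set Implicit Arguments. Unset Strict Implicit. Unset Printing Implicit Defensive.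
Import GRing.Theory.
Section Local.
Local Open Scope ring_scope.
Variables (G : zmodType) (s4 : seq G).
Hypothesis s4u : uniq s4.
Hypothesis s4s : size s4 = 4%N.

Definition avoid (L : seq G) : G := nth 0 s4 (find (fun x => x \notin L) s4).

Lemma avoid_spec L : (size L <= 3)%N -> avoid L \notin L.
Proof.
move=> HL; apply: (nth_find 0 (a := fun x => x \notin L)).
apply/negPn/negP=> /hasPn H.
have : (size s4 <= size L)%N.
  by apply: uniq_leq_size => // x /H /negPn.
by rewrite s4s; lia.
Qed.

Lemma neq_add (x y : G) : (x == x + y) = (y == 0).
Proof.
apply/eqP/eqP => [H|->]; last by rewrite addr0.
by rewrite -(addKr x y) -H addNr.
Qed.

Definition root3 : seq G :=
  let w1 := avoid [:: 0] in let w2 := avoid [:: 0; - w1] in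
  let w3 := avoid [:: 0; - w1; - w2] in [:: w1; w2; w3].

Definition init (root : bool) (a b : G) (k : nat) : seq G :=
  if odd k then (if root then root3 else [:: avoid [:: 0; b - a]]) else [::].

Definition SW root a b k := a + \sum_(x <- init root a b k) x.
Definition U root a b k := let s := SW root a b k in avoid [:: 0; s; - s].
Definition lab (l : seq G) (u : G) (i : nat) :=
  if (i < size l)%N then nth 0 l i else if odd (i - size l) then - u else u.
Definition LAB root a b k i := lab (init root a b k) (U root a b k) i.

Lemma lab_sum l u m : \sum_(i < size l + m.*2) lab l u i = \sum_(x <- l) x.
Proof.
elim: m => [|m IH].
  rewrite addn0 (big_nth 0) big_mkord; apply: eq_bigr => i _.
  by rewrite /lab ltn_ord.
rewrite doubleS !addnS !big_ord_recr /= IH /lab.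
have -> : (size l + m.*2 < size l)%N = false by lia.
have -> : ((size l + m.*2).+1 < size l)%N = false by lia.
rewrite -addnS !addKn /= odd_double /= addrK //.
Qed.

Lemma local_spec root a b k :
  (if root then (1 < k)%N && (a == 0) else (a != 0) && (b != a)) ->
  [/\ forall i, (i < k)%N -> (LAB root a b k i != 0) && (LAB root a b k i != SW root a b k),
     ~~ root -> SW root a b k != b &
     SW root a b k = a + \sum_(i < k) LAB root a b k i].
Proof.
move=> pre.
have [F1 F2 F3 F4] : [/\ forall x, x \in init root a b k -> (x != 0) && (x != SW root a b k),
    ~~ root -> SW root a b k != b, (size (init root a b k) <= k)%N & ~~ odd (k - size (init root a b k))].
  rewrite /SW /init.
  case: root pre => /andP[H1 H2]; case ok: (odd k) => /=.
  - rewrite /root3 /=; set w1 := avoid _; set w2 := avoid _; set w3 := avoid _.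
    have h1 : w1 \notin [:: 0] by apply: avoid_spec.
    have h2 : w2 \notin [:: 0; -w1] by apply: avoid_spec.
    have h3 : w3 \notin [:: 0; -w1; -w2] by apply: avoid_spec.
    move: h1 h2 h3; rewrite !inE !negb_or => h1 /andP[h2 h21] /and3P[h3 h31 h32].
    have -> : \sum_(x <- [:: w1; w2; w3]) x = w1 + w2 + w3.
      by rewrite !big_cons big_nil addr0 !addrA.
    rewrite (eqP H2) add0r.
    split=> //.
    + move=> x; rewrite !inE => /or3P[] /eqP->; apply/andP; split=> //.
      * by rewrite -addrA neq_add addrC addr_eq0.
      * by rewrite (addrC w1) -addrA neq_add (addrC w1) addr_eq0.
      * by rewrite addrC neq_add addrC addr_eq0.
    + by move: H1 ok; case: k => [|[|[|k]]].
    + by rewrite oddB; [rewrite ok | move: H1 ok; case: k => [|[|[|k]]]].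
  - by split=> //; rewrite subn0 ok.
  - set w := avoid _; have : w \notin [:: 0; b - a] by apply: avoid_spec.
    rewrite !inE negb_or => /andP[h1 h2].
    have -> : \sum_(x <- [:: w]) x = w by rewrite big_cons big_nil addr0.
    split.
    + move=> x; rewrite inE => /eqP->; rewrite h1 /=.
      by rewrite addrC neq_add.
    + move=> _; apply: contra h2 => /eqP<-; by rewrite addrC addKr.
    + by move: ok; case: k.
    + by rewrite oddB; [rewrite ok | move: ok; case: k].
  - by rewrite big_nil addr0 eq_sym H2; split=> //; rewrite subn0 ok.
set l := init root a b k; set s := SW root a b k; set u := U root a b k.
have Hu : u \notin [:: 0; s; - s] by apply: avoid_spec.
move: Hu; rewrite !inE !negb_or => /and3P[u0 us uns].
split=> //.
- move=> i ik; rewrite /LAB -/l -/u /lab.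
  case: ltnP => il; first by apply: F1; apply: mem_nth.
  case: odd; apply/andP; split=> //.
  + by rewrite oppr_eq0.
  + by rewrite eqr_oppLR.
- have [m Hm] : exists m, k = (size l + m.*2)%N.
    exists (k - size l)./2; have := odd_double_half (k - size l).
    rewrite (negbTE F4) add0n => H; by rewrite H subnKC.
  by rewrite /LAB -/l -/u Hm lab_sum.
Qed.
End Local.

Section Tree.
Variables (V : finType) (e : rel V).
Hypothesis esym : symmetric e.
Hypothesis eirr : irreflexive e.
Hypothesis econn : forall x y : V, connect e x y.
Hypothesis eacyc : forall p : seq V, ucycle e p -> (size p <= 2)%N.
Variable r : V.

Fixpoint ball n : {set V} :=
  if n is m.+1 then ball m :|: [set y | [exists x in ball m, e x y]] else [set r].

Lemma ball_S n : ball n \subset ball n.+1.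
Proof. by rewrite /= subsetUl. Qed.

Lemma ball_mono m n : m <= n -> ball m \subset ball n.
Proof.
elim: n => [|n IH]; first by rewrite leqn0 => /eqP->.
rewrite leq_eqVlt => /orP[/eqP->//|]; rewrite ltnS => /IH H.
exact: subset_trans H (ball_S n).
Qed.

Lemma ball_path p x0 n : x0 \in ball n -> path e x0 p -> last x0 p \in ball (n + size p).
Proof.
elim: p x0 n => [|y p IH] x0 n /=; first by rewrite addn0.
move=> Hx /andP[exy Hp]; rewrite addnS -addSn; apply: IH Hp.
by rewrite /= in_setU; apply/orP; right; rewrite inE; apply/existsP; exists x0; rewrite Hx.
Qed.

Lemma in_ball_ex x : exists n, x \in ball n.
Proof.
have /connectP[p Hp ->] := econn r x.
by exists (0 + size p); apply: ball_path => //=; rewrite inE.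
Qed.

Definition d x := ex_minn (in_ball_ex x).

Lemma d_ball x : x \in ball (d x).
Proof. by rewrite /d; case: ex_minnP. Qed.

Lemma d_min x n : x \in ball n -> d x <= n.
Proof. by rewrite /d; case: ex_minnP => m _ H /H. Qed.

Lemma d_r : d r = 0.
Proof. by apply/eqP; rewrite -leqn0; apply: d_min; rewrite inE. Qed.

Lemma d0 x : d x = 0 -> x = r.
Proof. by move=> H; have := d_ball x; rewrite H inE => /eqP. Qed.

Lemma d_edge x y : e x y -> d y <= (d x).+1.
Proof.
move=> exy; apply: d_min; rewrite /= in_setU; apply/orP; right.
by rewrite inE; apply/existsP; exists x; rewrite d_ball.
Qed.

Lemma d_parent_ex x : x != r -> exists y, e x y && ((d y).+1 == d x).
Proof.
move=> xr; case E: (d x) => [|m]; first by rewrite (d0 E) eqxx in xr.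
have := d_ball x; rewrite E /= in_setU => /orP[H|].
  by have := d_min H; rewrite E ltnn.
rewrite inE => /existsP[y /andP[Hy eyx]]; exists y; rewrite esym eyx /=.
have H1 := d_min Hy; have H2 := d_edge eyx; rewrite E in H2.
by rewrite eqn_leq ltnS H1 /=.
Qed.

Definition p x := if [pick y | e x y && ((d y).+1 == d x)] is Some y then y else r.

Lemma p_spec x : x != r -> e x (p x) /\ (d (p x)).+1 = d x.
Proof.
move=> xr; rewrite /p; case: pickP => [y /andP[H1 /eqP H2]//|H].
by have [y] := d_parent_ex xr; rewrite H.
Qed.

Definition ev v := [rel x y | e x y && (x != v) && (y != v)].

Lemma ev_sym v : symmetric (ev v).
Proof. by move=> x y /=; rewrite esym -!andbA; congr (_ && _); rewrite andbC. Qed.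

Lemma chain v n z : d z = n -> z != v -> d z <= d v -> connect (ev v) z r.
Proof.
elim: n z => [|n IH] z Hz zv zd; first by rewrite (d0 Hz) connect0.
have zr : z != r by apply/eqP=> E; rewrite E d_r in Hz.
have [ez dz] := p_spec zr.
have pv : p z != v by apply/eqP=> E; move: zd; rewrite -dz E ltnn.
apply: connect_trans (connect1 _) (IH _ _ pv _) => /=.
- by rewrite ez zv pv.
- by apply/eqP; rewrite -eqSS dz Hz.
- by apply: leq_trans zd; rewrite -dz leqnSn.
Qed.

Lemma path_ev_all v x q : path (ev v) x q -> all (fun y => y != v) q.
Proof.
elim: q x => [|y q IH] x //= /andP[/andP[/andP[_ _] yv] Hq].
by rewrite yv (IH _ Hq).
Qed.

Lemma no_two v u1 u2 : e v u1 -> e v u2 -> u1 != u2 -> u1 != v ->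
  connect (ev v) u1 u2 -> False.
Proof.
move=> e1 e2 u12 u1v /connectP[q Hq E].
move: E; case: (shortenP Hq) => q' Hq' Uq' _ {Hq} E; subst u2.
have Ha := path_ev_all Hq'.
have Hp : path e u1 q' by apply: sub_path Hq' => x y /andP[/andP[]].
have := eacyc (p := v :: u1 :: q'); rewrite /ucycle /= -/(path e u1 (rcons q' v)).
rewrite rcons_path Hp e1 /=; move: Uq'; rewrite /= => /andP[-> ->].
rewrite esym e2 andbT /=.
have -> : v \notin u1 :: q'.
  rewrite inE negb_or eq_sym u1v /=; apply/negP=> /(allP Ha); rewrite eqxx //.
move=> /(_ isT); case: q' Hq' u12 e2 Ha Hp => [|z q'] //=; by rewrite eqxx.
Qed.

Lemma two_lower v u1 u2 : e v u1 -> e v u2 -> u1 != u2 -> u1 != v -> u2 != v ->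
  d u1 <= d v -> d u2 <= d v -> False.
Proof.
move=> e1 e2 u12 u1v u2v d1 d2; apply: (no_two e1 e2 u12 u1v).
apply: connect_trans (chain (erefl _) u1v d1) _.
by rewrite (sym_connect_sym (@ev_sym v)); apply: chain (erefl _) u2v d2.
Qed.

Lemma nbr x y : e x y -> (x != r /\ y = p x) \/ (y != r /\ x = p y).
Proof.
move=> exy.
have H1 := d_edge exy; have H2 := d_edge (y:=x) (x:=y); rewrite esym in H2.
have {}H2 := H2 exy.
have xy : x != y by apply/eqP=> E; rewrite E eirr in exy.
have low : forall a b, e a b -> d b < d a -> a != r /\ b = p a.
  move=> a b eab dab.
  have ar : a != r by apply/eqP=> E; rewrite E d_r in dab.
  split=> //; have [ep dp] := p_spec ar.
  apply/eqP; apply/negPn/negP=> bp.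
  apply: (two_lower eab ep bp).
  - by apply/eqP=> E; rewrite E ltnn in dab.
  - by apply/eqP=> E; move: dp; rewrite E; lia.
  - exact: ltnW.
  - by rewrite -dp leqnSn.
case: (ltngtP (d x) (d y)) => [lt|gt|eq].
- by right; apply: low => //; rewrite esym.
- by left; apply: low.
- have xr : x != r by apply/eqP=> E; move: eq; rewrite E d_r => H; have yr := d0 (Logic.eq_sym H); rewrite E yr eqxx in xy.
  exfalso; have [ep dp] := p_spec xr.
  apply: (two_lower exy ep _ _ _ _ _).
  + by apply/eqP=> E; move: dp; rewrite -E -eq; lia.
  + by rewrite eq_sym.
  + by apply/eqP=> E; move: dp; rewrite E; lia.
  + by rewrite eq.
  + by rewrite -dp leqnSn.
Qed.

Lemma exists_deg2 : (3 <= #|V|)%N -> exists v u1 u2, [/\ u1 != u2, e v u1 & e v u2].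
Proof.
move=> HV.
case: (boolP [exists z, 2 <= d z]) => [/existsP[z dz]|].
  have zr : z != r by apply/eqP=> E; rewrite E d_r in dz.
  have [ez dpz] := p_spec zr.
  have pzr : p z != r by apply/eqP=> E; move: dpz; rewrite E d_r => Ez; rewrite -Ez in dz.
  have [ep dpp] := p_spec pzr.
  exists (p z), z, (p (p z)); split=> //; last by rewrite esym.
  apply/eqP=> E; move: dpz; rewrite -dpp -E; lia.
rewrite negb_exists => /forallP Hd.
have : 1 < #|[set~ r]| by rewrite cardsC1; case: #|V| HV => [|[|[|]]].
move=> /card_gt1P[y1 [y2 [H1 H2 y12]]]; rewrite !inE in H1 H2.
have dp y : y != r -> p y = r.
  move=> yr; have [_ dy] := p_spec yr; apply: d0.
  have := Hd y; rewrite -dy; lia.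
exists r, y1, y2; split=> //.
- by have [ey _] := p_spec H1; rewrite esym -{1}(dp _ H1).
- by have [ey _] := p_spec H2; rewrite esym -{1}(dp _ H2).
Qed.


Local Open Scope ring_scope.
Variables (G : zmodType) (s4 : seq G).
Hypothesis s4u : uniq s4.
Hypothesis s4s : size s4 = 4%N.

Definition children x := [seq c <- index_enum V | (c != r) && (p c == x)].
Definition k x := size (children x).

Lemma mem_children x c : (c \in children x) = (c != r) && (p c == x).
Proof. by rewrite mem_filter mem_index_enum andbT. Qed.

Lemma children_uniq x : uniq (children x).
Proof. by rewrite filter_uniq // index_enum_uniq. Qed.

Fixpoint info n v : G * G :=
  if n is m.+1 then
    (if v == r then (0, 0) else
     let q := p v in let ab := info m q in
     (LAB s4 (q == r) ab.1 ab.2 (k q) (index v (children q)),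
      SW s4 (q == r) ab.1 ab.2 (k q)))
  else (0, 0).

Definition A v := (info (d v) v).1.
Definition B v := (info (d v) v).2.
Definition S v := SW s4 (v == r) (A v) (B v) (k v).

Lemma A_r : A r = 0.
Proof. by rewrite /A d_r. Qed.

Lemma info_eq v : v != r ->
  A v = LAB s4 (p v == r) (A (p v)) (B (p v)) (k (p v)) (index v (children (p v)))
  /\ B v = S (p v).
Proof.
move=> vr; have [_ dp] := p_spec vr.
by rewrite /A /B /S -dp /= (negbTE vr).
Qed.

Hypothesis hr : (1 < k r)%N.

Definition pre v := if v == r then (1 < k v)%N && (A v == 0) else (A v != 0) && (B v != A v).

Lemma pre_all n v : (d v <= n)%N -> pre v.
Proof.
elim: n v => [|n IH] v dv.
  have -> : v = r by apply: d0; move: dv; rewrite leqn0 => /eqP.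
  by rewrite /pre eqxx hr A_r eqxx.
rewrite /pre; case: ifP => [/eqP->|/negbT vr]; first by rewrite hr A_r eqxx.
have [_ dp] := p_spec vr.
have Hq : pre (p v) by apply: IH; rewrite -ltnS dp.
have [Hi _ _] := local_spec s4u s4s Hq.
have [-> ->] := info_eq vr.
have := Hi (index v (children (p v))).
rewrite index_mem mem_children vr eqxx => /(_ isT) /andP[-> H].
by rewrite eq_sym.
Qed.

Lemma pre_v v : pre v.
Proof. exact: (pre_all (leqnn _)). Qed.

Definition f u v := if (d u < d v)%N then A v else if (d v < d u)%N then A u else 0.

Lemma weight_eq x : weight e f x = S x.
Proof.
rewrite /weight (bigID (fun u => (x != r) && (u == p x))) /=.
rewrite /S; have [_ _ ->] := local_spec s4u s4s (pre_v x).
congr (_ + _).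
  case: (boolP (x == r)) => [/eqP->|xr].
    by rewrite big_pred0 ?A_r // => u; rewrite andbF.
  have [ex dx] := p_spec xr.
  rewrite (big_pred1 (p x)) /=; last first.
    by move=> u /=; case: eqP => [->|]; rewrite ?ex ?andbF.
  rewrite /f -dx ltnSn.
  have -> : ((d (p x)).+1 < d (p x))%N = false by lia.
  by [].
have E : forall u, (e x u && ~~ ((x != r) && (u == p x))) = (u != r) && (p u == x).
  move=> u; apply/idP/idP.
    move=> /andP[exu H]; case: (nbr exu) => [[xr up]|[ur xp]].
      by rewrite xr up eqxx in H.
    by rewrite ur xp eqxx.
  move=> /andP[ur /eqP pu]; have [eu du] := p_spec ur.
  have exu : e x u by rewrite -pu esym.
  rewrite exu /=; apply/negP=> /andP[xr /eqP E].
  have [_ dx] := p_spec xr; move: du dx; rewrite pu -E; lia.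
rewrite (eq_bigl _ _ E).
rewrite (eq_bigr A); last first.
  move=> u /andP[ur /eqP pu]; have [_ du] := p_spec ur.
  by rewrite /f -pu -du ltnSn.
rewrite -big_filter -/(children x) (big_nth x) big_mkord.
apply: eq_bigr => i _.
have Hi : nth x (children x) i \in children x by apply: mem_nth.
move: (Hi); rewrite mem_children => /andP[nr /eqP pn].
have [-> _] := info_eq nr.
by rewrite pn index_uniq ?children_uniq.
Qed.

Lemma labeling_ok : exists f : V -> V -> G,
    nonzero_edge_labeling e f /\
    (forall u v, e u v -> weight e f u != weight e f v).
Proof.
exists f; split; first split.
- move=> u v; rewrite /f; case: ltngtP => //.
- move=> u v euv; rewrite /f; case: (nbr euv) => [[ur vp]|[vr up]].
    have [_ du] := p_spec ur; rewrite vp -du ltnSn ltnNge leqW //=.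
    by have := pre_v u; rewrite /pre (negbTE ur) => /andP[].
  have [_ dv] := p_spec vr; rewrite up -dv ltnSn.
  by have := pre_v v; rewrite /pre (negbTE vr) => /andP[].
- move=> u v euv; rewrite !weight_eq.
  have key : forall c, c != r -> S c != S (p c).
    move=> c cr; have Hc := pre_v c.
    have [_ Hb _] := local_spec s4u s4s Hc.
    have [_ <-] := info_eq cr.
    by apply: Hb.
  case: (nbr euv) => [[ur ->]|[vr ->]].
    exact: key.
  by rewrite eq_sym; exact: key.
Qed.

End Tree.

Unset Implicit Arguments.
Local Open Scope ring_scope.

Theorem theorem5 (V : finType) (e : rel V) (G : zmodType) :
  is_tree e -> (3 <= #|V|)%N ->
  (exists s : seq G, uniq s /\ size s = 4%N) ->
  exists f : V -> V -> G,
    nonzero_edge_labeling e f /\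
    (forall u v, e u v -> weight e f u != weight e f v).
Proof.
move=> [[es ei] ec ea] HV [s4 [s4u s4s]].
have : (0 < #|V|)%N by lia.
case/card_gt0P => r0 _.
have [v [u1 [u2 [u12 e1 e2]]]] := exists_deg2 es ec r0 HV.
apply: (@labeling_ok V e es ei ec ea v G s4 s4u s4s).
have inc : forall u, e v u -> u \in children ec v v.
  move=> u evu; rewrite mem_children.
  case: (nbr es ei ec ea v evu) => [[/negP[]]|[ur <-]] //.
  by rewrite ur eqxx.
rewrite /k; have := uniq_leq_size (s1 := [:: u1; u2]) (s2 := children ec v v).
rewrite /= inE u12 /=; apply=> // x; rewrite !inE => /orP[]/eqP->; exact: inc.
Qed.
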